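(* Let $G$ be a connected graph of order $n\geq 2$ and let $H$ be a connected graph of order $m\geq 1$. (1) If $0\leq g\leq m-1$, then $\kappa_g(G*H)=1$. (2) Let $k\geq 1$ be an integer such that $G$ has at least one $R_k$-cutset, and let $g$ be an integer with $k(m+1)<g+1\leq (k+1)(m+1)$. Then $G*H$ has an $R_g$-cutset and $$\kappa_g(G*H)=|X|(m+1),$$ where $X$ is a minimum-cardinality vertex subset of $G$ such that $G-X$ is disconnected and every connected component of $G-X$ has at least $k+1$ vertices (i.e. $|X|=\kappa_k(G)$).
   Context: All graphs are finite and simple. The corona $G*H$ is obtained by taking one copy of $G$ and $|V(G)|$ disjoint copies of $H$, and joining every vertex of the $i$-th copy of $H$ to the $i$-th vertex of $G$, for $i=1,\ldots,|V(G)|$. A set $S\subseteq V(G)$ is a cutset if $G-S$ is disconnected. For a non-negative integer $g$, a cutset $S$ is an $R_g$-cutset if every connected component of $G-S$ has at least $g+1$ vertices. If $G$ has at least one $R_g$-cutset, the $g$-extra connectivity $\kappa_g(G)$ is the minimum cardinality of an $R_g$-cutset of $G$. *)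

(* Defs.v *)
(* A finite simple graph is a symmetric irreflexive
   relation e : rel V on a finType V. *)
From mathcomp Require Import all_boot.
Set Implicit Arguments. Unset Strict Implicit. Unset Printing Implicit Defensive.

(* Corona G*H: vertices inl i (copy of G) and inr (i,h) (vertex h of the i-th
   copy of H).  Edges: G-edges, H-edges inside each copy, and i -- (i,h). *)
Definition corona_rel (T T' : finType) (eG : rel T) (eH : rel T')
  : rel (T + (T * T'))%type :=
  fun x y =>
    match x, y with
    | inl a, inl b => eG a b
    | inl a, inr (i, _) => a == i
    | inr (i, _), inl a => i == a
    | inr (i, h), inr (j, h') => (i == j) && eH h h'
    end.

Section Conn.
Variable V : finType.
Implicit Types (e : rel V) (S : {set V}).

Definition gconnected e := forall x y : V, connect e x y.

Definition del_rel e S : rel V := fun x y => [&& x \notin S, y \notin S & e x y].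

Definition comp e S (x : V) : {set V} :=
  [set y | (y \notin S) && connect (del_rel e S) x y].

Definition cutset e S : bool :=
  [exists x, exists y, [&& x \notin S, y \notin S & ~~ connect (del_rel e S) x y]].

Definition Rg_cutset e (g : nat) S : bool :=
  cutset e S && [forall x, (x \notin S) ==> (g < #|comp e S x|)].

Definition has_Rg_cutset e (g : nat) : bool := [exists S, Rg_cutset e g S].

(* kappa_g: minimum cardinality of an R_g-cutset (meaningful when one exists) *)
Definition kappa e (g : nat) : nat :=
  \big[minn/#|V|]_(S : {set V} | Rg_cutset e g S) #|S|.
End Conn.

(* Main.v *)
Require Import Defs.
From mathcomp Require Import all_boot zify.
Set Implicit Arguments. Unset Strict Implicit. Unset Printing Implicit Defensive.

Lemma connect_map (A B : finType) (r : rel A) (r' : rel B) (f : A -> B) :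
  (forall a b, r a b -> connect r' (f a) (f b)) ->
  forall a b, connect r a b -> connect r' (f a) (f b).
Proof.
move=> H a b /connectP [s]; elim: s a => [|c s IH] a /=; first by move=> _ ->.
case/andP=> rac ps eb; exact: connect_trans (H _ _ rac) (IH _ ps eb).
Qed.

Lemma connect_fromS (V : finType) (e : rel V) (S : {set V}) (x y : V) :
  x \in S -> connect (del_rel e S) x y -> x = y.
Proof.
move=> xS /connectP [[|c s] /=]; first by move=> _ ->.
by rewrite /del_rel xS.
Qed.

Lemma del_sym (V : finType) (e : rel V) (S : {set V}) : symmetric e -> symmetric (del_rel e S).
Proof. by move=> se x y; rewrite /del_rel se andbCA. Qed.

Lemma corona_sym (T T' : finType) (eG : rel T) (eH : rel T') :
  symmetric eG -> symmetric eH -> symmetric (corona_rel eG eH).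
Proof.
move=> sG sH [a|[i h]] [b|[j h']] /=.
- exact: sG.
- exact: eq_sym.
- exact: eq_sym.
- by rewrite sH eq_sym.
Qed.

Definition pr (T T' : Type) (v : T + (T * T')) : T :=
  match v with inl a => a | inr (i, _) => i end.

Lemma proj_connect (T T' : finType) (eG : rel T) (eH : rel T')
  (S : {set T + T * T'}) (X : {set T}) :
  (forall a, (inl a \in S) = (a \in X)) ->
  forall x y, connect (del_rel (corona_rel eG eH) S) x y ->
    connect (del_rel eG X) (pr x) (pr y).
Proof.
move=> hX; apply: connect_map => -[a|[i h]] [b|[j h']]; rewrite /del_rel /= ?hX.
- by move=> H; apply: connect1.
- by case/and3P => _ _ /eqP ->.
- by case/and3P => _ _ /eqP ->.
- by case/and3P => _ _ /andP [/eqP -> _].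
Qed.

Lemma lift_connect (T T' : finType) (eG : rel T) (eH : rel T')
  (S : {set T + T * T'}) (X : {set T}) :
  (forall a, (inl a \in S) = (a \in X)) ->
  forall a b, connect (del_rel eG X) a b ->
    connect (del_rel (corona_rel eG eH) S) (inl a) (inl b).
Proof.
move=> hX; apply: (connect_map (f := @inl T (T * T'))) => x y H.
by apply: connect1; rewrite /del_rel /= !hX.
Qed.

Lemma copy_connect (T T' : finType) (eG : rel T) (eH : rel T')
  (S : {set T + T * T'}) i :
  (forall h, inr (i, h) \notin S) -> forall h h', connect eH h h' ->
  connect (del_rel (corona_rel eG eH) S) (inr (i, h)) (inr (i, h')).
Proof.
move=> hS; apply: (connect_map (f := fun h => @inr T (T * T') (i, h))) => h h' H.
by apply: connect1; rewrite /del_rel /= !hS eqxx H.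
Qed.

Lemma to_base (T T' : finType) (eG : rel T) (eH : rel T')
  (S : {set T + T * T'}) x :
  inl (pr x) \notin S -> x \notin S ->
  connect (del_rel (corona_rel eG eH) S) x (inl (pr x)).
Proof.
case: x => [a|[i h]] /= hi hx; first exact: connect0.
by apply: connect1; rewrite /del_rel /= hi hx eqxx.
Qed.

Lemma via_base (T T' : finType) (eG : rel T) (eH : rel T')
  (symG : symmetric eG) (symH : symmetric eH)
  (S : {set T + T * T'}) (X : {set T}) :
  (forall a, (inl a \in S) = (a \in X)) ->
  forall x y, x \notin S -> y \notin S -> pr x \notin X -> pr y \notin X ->
  connect (del_rel eG X) (pr x) (pr y) ->
  connect (del_rel (corona_rel eG eH) S) x y.
Proof.
move=> hX x y xS yS px py c.
have h1 : connect (del_rel (corona_rel eG eH) S) x (inl (pr x)).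
  by apply: to_base; rewrite ?hX.
have h2 : connect (del_rel (corona_rel eG eH) S) y (inl (pr y)).
  by apply: to_base; rewrite ?hX.
have h3 := lift_connect eH hX c.
apply: connect_trans h1 (connect_trans h3 _).
by rewrite (sym_connect_sym (del_sym _ (corona_sym symG symH))).
Qed.

Lemma card_fiber (T T' : finType) (C : {set T}) :
  #|[set v : T + T * T' | pr v \in C]| = #|C| * (#|T'| + 1).
Proof.
have nl : forall a (B : {set T * T'}), (@inl T (T * T') a \in @inr T (T * T') @: B) = false.
  by move=> a B; apply/negbTE; apply/imsetP => -[].
have nr : forall x (B : {set T}), (@inr T (T * T') x \in @inl T (T * T') @: B) = false.
  by move=> x B; apply/negbTE; apply/imsetP => -[].
have il : injective (@inl T (T * T')) by move=> ? ? [].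
have ir : injective (@inr T (T * T')) by move=> ? ? [].
have -> : [set v : T + T * T' | pr v \in C] = inl @: C :|: inr @: setX C [set: T'].
  apply/setP => -[a|[i h]]; rewrite !inE /=.
    by rewrite mem_imset // nl orbF.
  by rewrite nr mem_imset // in_setX in_setT andbT.
rewrite cardsU.
have -> : inl @: C :&: inr @: setX C [set: T'] = set0.
  by apply/setP => -[a|x]; rewrite inE in_set0 ?nl ?nr ?andbF.
by rewrite cards0 subn0 !card_imset // cardsX cardsT addn1 mulnS.
Qed.

Lemma bigmin_le_seq (I : eqType) (r : seq I) (P : pred I) (F : I -> nat) d x :
  x \in r -> P x -> \big[minn/d]_(i <- r | P i) F i <= F x.
Proof.
elim: r => // y r IH; rewrite inE big_cons => /orP [/eqP -> Px | xr Px].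
  by rewrite Px geq_minl.
case: (P y); last exact: IH.
exact: leq_trans (geq_minr _ _) (IH xr Px).
Qed.

Lemma bigmin_le (I : finType) (P : pred I) (F : I -> nat) d x :
  P x -> \big[minn/d]_(i | P i) F i <= F x.
Proof. by move=> Px; apply: bigmin_le_seq Px; rewrite mem_index_enum. Qed.

Lemma bigmin_ge (I : finType) (P : pred I) (F : I -> nat) d b :
  b <= d -> (forall i, P i -> b <= F i) -> b <= \big[minn/d]_(i | P i) F i.
Proof.
move=> bd H; apply: (big_ind (fun x => b <= x)) => // x y bx b_y.
by rewrite leq_min bx.
Qed.

Lemma bigmin_cases (I : eqType) (r : seq I) (P : pred I) (F : I -> nat) d :
  \big[minn/d]_(i <- r | P i) F i = d \/
  exists2 i, P i & \big[minn/d]_(i <- r | P i) F i = F i.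
Proof.
elim: r => [|y r IH]; first by left; rewrite big_nil.
rewrite big_cons; case Py: (P y) => /=; last exact: IH.
move: IH; set R := \big[_/_]_(_ <- r | _) _ => IH.
case: (leqP (F y) R) => h.
  by right; exists y => //; apply/minn_idPl.
exact: IH.
Qed.

Lemma bigmin_attain (I : finType) (P : pred I) (F : I -> nat) d x :
  P x -> F x <= d -> exists2 i, P i & \big[minn/d]_(i | P i) F i = F i.
Proof.
move=> Px Fx; case: (bigmin_cases (index_enum I) P F d) => // h.
exists x => //; apply/anti_leq/andP; split; first exact: bigmin_le.
by rewrite /= h.
Qed.

Theorem theorem2p2 (T T' : finType) (eG : rel T) (eH : rel T')
  (symG : symmetric eG) (irrG : irreflexive eG)
  (symH : symmetric eH) (irrH : irreflexive eH)
  (connG : gconnected eG) (connH : gconnected eH)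
  (n m : nat) (hn : #|T| = n) (hm : #|T'| = m) (n2 : 2 <= n) (m1 : 1 <= m) :
  (forall g : nat, g <= m - 1 ->
     has_Rg_cutset (corona_rel eG eH) g /\ kappa (corona_rel eG eH) g = 1)
  /\
  (forall k g : nat, 1 <= k -> has_Rg_cutset eG k ->
     k * (m + 1) < g + 1 <= (k + 1) * (m + 1) ->
     has_Rg_cutset (corona_rel eG eH) g /\
     kappa (corona_rel eG eH) g = kappa eG k * (m + 1)).
Proof.
subst n m.
set e := corona_rel eG eH.
have cardV : #|{: T + T * T'}| = #|T| * (#|T'| + 1).
  rewrite -cardsT -(card_fiber T' [set: T]); apply: eq_card => v; by rewrite !inE.
split.
- move=> g hg.
  have /card_gt0P [i0 _] : 0 < #|T| by apply: leq_trans n2.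
  have /card_gt0P [j0] : 0 < #|[set~ i0]| by rewrite cardsC1 -ltnS prednK ?n2 //; apply: leq_trans n2.
  rewrite in_setC1 => ji.
  have /card_gt0P [h0 _] : 0 < #|T'| by [].
  set S1 : {set T + T * T'} := [set inl i0].
  have R1 : Rg_cutset e g S1.
    apply/andP; split.
      apply/existsP; exists (inr (i0, h0)); apply/existsP; exists (inl j0).
      rewrite !in_set1 /= ji /=; apply/negP => c.
      have hX : forall a, (inl a \in S1) = (a \in [set i0]) by move=> a; rewrite !in_set1.
      have := connect_fromS _ (proj_connect hX c); rewrite in_set1 eqxx => /(_ isT) /= ij.
      by rewrite ij eqxx in ji.
    apply/forallP => x; apply/implyP => xS.
    have hS : forall h, @inr T (T * T') (pr x, h) \notin S1 by move=> h; rewrite in_set1.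
    have sub : ((fun h => @inr T (T * T') (pr x, h)) @: [set: T']) \subset Defs.comp e S1 x.
      apply/subsetP => v /imsetP [h _ ->]; rewrite inE hS /=.
      case: x xS {hS} => [a|[i h']] xS /=.
        by apply: connect1; rewrite /del_rel /= xS in_set1 /= eqxx.
      apply: copy_connect; last exact: connH.
      by move=> h2; rewrite in_set1.
    have := subset_leq_card sub; rewrite card_imset ?cardsT; last by move=> ? ? [].
    by apply: leq_trans; rewrite -(subnK m1) addn1 ltnS.
  split; first by apply/existsP; exists S1.
  apply/anti_leq/andP; split.
    by have := bigmin_le (fun S : {set T + T * T'} => #|S|) #|{: T + T * T'}| R1; rewrite cards1.
  apply: bigmin_ge.
    by apply/card_gt0P; exists (inl i0).
  move=> S /andP [/existsP [x /existsP [y /and3P [xS yS nc]]] _].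
  rewrite card_gt0; apply/negP => /eqP S0; move: nc xS yS; rewrite S0 => nc xS yS.
  have hX : forall a, (inl a \in (set0 : {set T + T * T'})) = (a \in (set0 : {set T})).
    by move=> a; rewrite !in_set0.
  case/negP: nc; apply: (via_base symG symH hX) => //; rewrite ?in_set0 //.
  apply: (connect_map (f := id)) (connG _ _) => a b ab.
  by apply: connect1; rewrite /del_rel !in_set0.
- move=> k g k1 /existsP [X0 RX0] /andP [hg1 hg2].
  have [X1 RX1 kX1] := @bigmin_attain _ _ (fun X : {set T} => #|X|) #|T| X0 RX0 (max_card _).
  set W := fun X : {set T} => [set v : T + T * T' | pr v \in X].
  have hW : forall X a, (inl a \in W X) = (a \in X) by move=> X a; rewrite inE.
  have RW : forall X, Rg_cutset eG k X -> Rg_cutset e g (W X).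
    move=> X /andP [/existsP [a /existsP [b /and3P [aX bX nc]]] /forallP cmp].
    apply/andP; split.
      apply/existsP; exists (inl a); apply/existsP; exists (inl b).
      rewrite !hW aX bX /=; apply/negP => c; case/negP: nc.
      exact: (proj_connect (hW X) c).
    apply/forallP => x; apply/implyP => xS.
    have px : pr x \notin X by rewrite inE in xS.
    have := cmp (pr x); rewrite px /= => ck.
    have sub : W (Defs.comp eG X (pr x)) \subset Defs.comp e (W X) x.
      apply/subsetP => v; rewrite !inE => /andP [pv c]; rewrite pv /=.
      by apply: (via_base symG symH (hW X)) => //; rewrite inE.
    have := subset_leq_card sub; rewrite card_fiber; apply: leq_trans.
    rewrite -addn1; apply: leq_trans hg2 _; rewrite leq_mul2r; apply/orP; right; by rewrite addn1.
  split; first by apply/existsP; exists (W X1); apply: RW.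
  have kX : kappa eG k = #|X1| by [].
  apply/anti_leq/andP; split.
    have := bigmin_le (fun S : {set T + T * T'} => #|S|) #|{: T + T * T'}| (RW _ RX1).
    by rewrite /= card_fiber kX.
  apply: bigmin_ge.
    by rewrite cardV kX leq_mul2r max_card orbT.
  move=> S RS; have := RS; case/andP=> [/existsP [x /existsP [y /and3P [xS yS nc]]] /forallP cmp].
  set X := [set a | inl a \in S].
  have hX : forall a, (inl a \in S) = (a \in X) by move=> a; rewrite inE.
  have inS : forall v, pr v \in X -> v \in S.
    move=> [a|[a h]] /=; first by rewrite hX.
    rewrite inE => aS; apply/negPn/negP => vS.
    have := cmp (inr (a, h)); rewrite vS /= => cg.
    have sub : Defs.comp e S (inr (a, h)) \subset ((fun h => @inr T (T * T') (a, h)) @: [set: T']).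
      apply/subsetP => v; rewrite inE => /andP [vS' c].
      have := connect_fromS _ (proj_connect hX c); rewrite -hX aS => /(_ isT) /= av.
      case: v vS' av {c} => [b|[b h']] /= vS' ab.
        by rewrite -ab aS in vS'.
      by apply/imsetP; exists h'; rewrite ?ab.
    have := subset_leq_card sub; rewrite card_imset ?cardsT; last by move=> ? ? [].
    move=> le; have := leq_trans cg le => gm.
    have : #|T'| + 1 <= k * (#|T'| + 1) by rewrite leq_pmull.
    move=> h1; lia.
  have RX : Rg_cutset eG k X.
    apply/andP; split.
      apply/existsP; exists (pr x); apply/existsP; exists (pr y).
      have px : pr x \notin X by exact: (contra (inS x) xS).
      have py : pr y \notin X by exact: (contra (inS y) yS).
      rewrite px py /=; apply: contra nc => c.
      exact: (via_base symG symH hX).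
    apply/forallP => a; apply/implyP => aX.
    have := cmp (inl a); rewrite hX aX /= => cg.
    have sub : Defs.comp e S (inl a) \subset W (Defs.comp eG X a).
      apply/subsetP => v; rewrite !inE => /andP [vS c].
      rewrite (proj_connect hX c) andbT.
      rewrite hX; exact: (contra (inS v) vS).
    have := leq_trans cg (subset_leq_card sub); rewrite card_fiber => h.
    have h3 : k * (#|T'| + 1) < #|Defs.comp eG X a| * (#|T'| + 1) by lia.
    by move: h3; rewrite ltn_mul2r => /andP [].
  have sW : W X \subset S by apply/subsetP => v; rewrite inE; exact: inS.
  have := subset_leq_card sW; rewrite card_fiber; apply: leq_trans.
  by rewrite leq_mul2r (bigmin_le (fun X : {set T} => #|X|) _ RX) orbT.
Qed.
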